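(* Fix a countable collection of languages $\mathcal{L}$ and $\rho\in(0,1]$. Under enumerations with vanishing noise rate and arbitrary omissions, there exists a set-based generator that generates in the limit from $\mathcal{L}$ and achieves set-based lower density $\rho$ if and only if the following holds: for every non-empty finite subcollection $\mathcal{L}'\subseteq\mathcal{L}$ with $|\bigcap_{L\in\mathcal{L}'}L|=\infty$, every $L\in\mathcal{L}'$ satisfies $\mu_{\rm low}\big(\bigcap_{L''\in\mathcal{L}'}L'',\,L\big)\ge\rho$.
   Context: The universe is $U=\mathbb{N}$ with its natural order. A language is an infinite subset of $U$; a collection is a countable family of languages. For $A,B\subseteq\mathbb{N}$ with $B=\{b_1<b_2<\cdots\}$, $\mu_{\rm low}(A,B)=\liminf_n\frac1n|A\cap\{b_1,\dots,b_n\}|$. An enumeration is a sequence of distinct elements of $U$; $S_n=\{x_1,\dots,x_n\}$; the empirical noise rate is $R(L;x_{1:n})=\frac1n|\{t\le n:x_t\notin L\}|$. An enumeration of $K$ with vanishing ($o(1)$) noise rate and arbitrary omissions is a sequence in which every element of some infinite $\hat K\subseteq K$ appears exactly once and $R(\hat K;x_{1:n})\to0$. A set-based generator is a sequence of maps that, given $x_1,\dots,x_n$ (and knowledge of $\mathcal{L}$, not of $K$), outputs $A_n\subseteq U\setminus S_n$. It generates in the limit if for every $K\in\mathcal{L}$ and admissible enumeration of $K$ there is $n^\star$ with $A_n\subseteq K$ for all $n\ge n^\star$; it achieves set-based lower density $\rho$ if $\liminf_n\mu_{\rm low}(A_n,K)\ge\rho$ for every such $K$ and enumeration. *)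

(* Defs.v *)
From HB Require Import structures.
From mathcomp Require Import all_boot all_order all_algebra.
From mathcomp Require Import all_classical all_reals all_analysis.
Set Implicit Arguments. Unset Strict Implicit. Unset Printing Implicit Defensive.
Import Order.TTheory GRing.Theory Num.Theory numFieldNormedType.Exports.
Local Open Scope classical_set_scope.
Local Open Scope ring_scope.

(* Languages are subsets of U = nat ([set nat]); a collection is a countable
   family of infinite subsets of nat, represented as a [set (set nat)]. *)
Definition is_collection (C : set (set nat)) : Prop :=
  countable C /\ (forall L, C L -> infinite_set L).

(* b_{n+1}: the element of B having exactly n elements of B below it
   (0-indexed n-th element of B in increasing order). *)
Definition bnth (B : set nat) (n : nat) : nat :=
  xget 0%N [set b | B b /\ (\sum_(y < b) `[< B y >])%N = n].

Definition count_in (A B : set nat) (n : nat) : nat :=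
  (\sum_(i < n) `[< A (bnth B i) >])%N.

Definition mu_low (R : realType) (A B : set nat) : \bar R :=
  limn_einf (fun n => ((count_in A B n.+1)%:R / (n.+1)%:R : R)%:E).

(* Empirical noise rate R(L; x_{1:n+1}) of an enumeration x : nat -> nat
   (x 0 = x_1, ...). *)
Definition noise_rate (R : realType) (L : set nat) (x : nat -> nat) (n : nat) : R :=
  (\sum_(t < n.+1) `[< ~ L (x t) >])%:R / (n.+1)%:R.

Definition admissible (R : realType) (K : set nat) (x : nat -> nat) : Prop :=
  injective x /\
  exists Khat : set nat,
    Khat `<=` K /\ infinite_set Khat /\ Khat `<=` range x /\
    (noise_rate R Khat x n @[n --> \oo] --> 0%R).

Definition prefix (x : nat -> nat) (n : nat) : seq nat := mkseq x n.

Definition set_generator (G : seq nat -> set nat) : Prop :=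
  forall s y, y \in s -> ~ G s y.

(* A_n for n >= 1 (index shifted: gen_out G x n = A_{n+1}). *)
Definition gen_out (G : seq nat -> set nat) (x : nat -> nat) (n : nat) : set nat :=
  G (prefix x n.+1).

Definition generates_in_limit (G : seq nat -> set nat) (K : set nat)
  (x : nat -> nat) : Prop :=
  exists nstar, forall n, (nstar <= n)%N -> gen_out G x n `<=` K.

Definition achieves_density (R : realType) (rho : R) (G : seq nat -> set nat)
  (K : set nat) (x : nat -> nat) : Prop :=
  (rho%:E <= limn_einf (fun n => mu_low R (gen_out G x n) K))%E.

(* Main.v *)
Require Import Defs.
From HB Require Import structures.
From mathcomp Require Import all_boot all_order all_algebra.
From mathcomp Require Import all_classical all_reals all_analysis.
From mathcomp Require Import finmap zify.
Import Order.TTheory GRing.Theory Num.Theory numFieldNormedType.Exports.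
Local Open Scope classical_set_scope.

Section P1.
Local Open Scope ring_scope.
Definition cnt (B : set nat) (b : nat) : nat := (\sum_(y < b) `[< B y >])%N.

Lemma cntS B b : cnt B b.+1 = (cnt B b + `[< B b >])%N.
Proof. by rewrite /cnt big_ord_recr. Qed.

Lemma cnt0 B : cnt B 0 = 0%N.
Proof. by rewrite /cnt big_ord0. Qed.

Lemma cnt_mono B m n : (m <= n)%N -> (cnt B m <= cnt B n)%N.
Proof.
elim: n => [|n IH]; first by rewrite leqn0 => /eqP ->.
rewrite leq_eqVlt => /orP[/eqP -> //|]; rewrite ltnS => /IH h.
by rewrite cntS (leq_trans h) ?leq_addr.
Qed.

Lemma infinite_unbounded (B : set nat) : infinite_set B ->
  forall m, exists b, (m <= b)%N /\ B b.
Proof.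
move=> inf m; apply: contrapT => hn; apply: inf.
apply: (@sub_finite_set _ _ `I_m) => // b Bb /=.
rewrite ltnNge; apply/negP => mb; apply: hn; by exists b.
Qed.

Lemma cnt_unbounded (B : set nat) : infinite_set B ->
  forall n, exists b, (n <= cnt B b)%N.
Proof.
move=> inf; elim=> [|n [b hb]]; first by exists 0%N.
have [b' [bb' Bb']] := @infinite_unbounded B inf b.
exists b'.+1; rewrite cntS.
have -> : `[< B b' >] = true by apply/asboolP.
by rewrite addn1 ltnS (leq_trans hb) // cnt_mono.
Qed.

Lemma cnt_exists (B : set nat) : infinite_set B ->
  forall n, exists b, B b /\ cnt B b = n.
Proof.
move=> inf n.
have ex : exists b, (n < cnt B b)%N by apply: (@cnt_unbounded B inf).
case: (ex_minnP ex) => b0 hb0 hmin.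
case: b0 hb0 hmin => [|b]; first by rewrite cnt0.
move=> hb hmin.
have hle : (cnt B b <= n)%N.
  rewrite leqNgt; apply/negP => /hmin; by rewrite ltnn.
move: hb; rewrite cntS; case: (asboolP (B b)) => Bb.
  by rewrite addn1 ltnS => hn; exists b; split => //; apply/eqP; rewrite eqn_leq hle hn.
by rewrite addn0 => hn; move: (leq_ltn_trans hle hn); rewrite ltnn.
Qed.

Lemma bnth_spec (B : set nat) n : infinite_set B ->
  B (bnth B n) /\ cnt B (bnth B n) = n.
Proof.
move=> inf; rewrite /bnth; apply: (@xgetPex _ 0%N [set b | B b /\ _ = n]).
exact: (@cnt_exists B inf).
Qed.

Lemma cnt_inj (B : set nat) b b' : B b -> B b' -> cnt B b = cnt B b' -> b = b'.
Proof.
move=> Bb Bb' e; apply: contrapT => /eqP; rewrite neq_ltn => /orP[] lt.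
  have : (cnt B b.+1 <= cnt B b')%N by apply: cnt_mono.
  rewrite cntS e; have -> : `[< B b >] = true by apply/asboolP.
  by rewrite addn1 ltnn.
have : (cnt B b'.+1 <= cnt B b)%N by apply: cnt_mono.
rewrite cntS e; have -> : `[< B b' >] = true by apply/asboolP.
by rewrite addn1 ltnn.
Qed.

Lemma bnth_inj (B : set nat) : infinite_set B -> injective (bnth B).
Proof.
move=> inf m n e.
have [_ <-] := @bnth_spec B m inf; have [_ <-] := @bnth_spec B n inf.
by rewrite e.
Qed.

Lemma bnth_cnt (B : set nat) b : infinite_set B -> B b -> bnth B (cnt B b) = b.
Proof.
move=> inf Bb; have [h1 h2] := @bnth_spec B (cnt B b) inf.
by apply: (@cnt_inj B) => //; rewrite h2.
Qed.

End P1.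

Section P2.
Local Open Scope ring_scope.
Lemma count_uniq_le (t s : seq nat) : uniq t -> (count (mem s) t <= size s)%N.
Proof.
move=> ut; rewrite -size_filter.
apply: (leq_trans _ (size_undup s)); apply: uniq_leq_size.
  exact: filter_uniq.
by move=> y; rewrite mem_filter mem_undup => /andP[].
Qed.

Lemma count_in_sub (A I K : set nat) (s : seq nat) n : infinite_set K ->
  (forall y, I y -> y \notin s -> A y) ->
  (count_in I K n <= count_in A K n + size s)%N.
Proof.
move=> inf hA; rewrite /count_in.
apply: (@leq_trans (\sum_(i < n) (`[< A (bnth K i) >] + (bnth K i \in s)))%N).
  apply: leq_sum => i _.
  case: (asboolP (I (bnth K i))) => Ii //.
  case: (boolP (bnth K i \in s)) => hs; first by rewrite addn1.
  by have -> : `[< A (bnth K i) >] = true by apply/asboolP; exact: hA.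
rewrite big_split /= leq_add2l.
have -> : (\sum_(i < n) (bnth K i \in s) = count (mem s) (map (bnth K) (iota 0 n)))%N.
  rewrite -sum1_count big_map.
  have -> : iota 0 n = index_iota 0 n by rewrite /index_iota subn0.
  rewrite big_mkord [RHS]big_mkcond /=.
  by apply: eq_bigr => i _; case: (bnth K i \in s).
apply: count_uniq_le; rewrite map_inj_uniq ?iota_uniq //; exact: bnth_inj.
Qed.

End P2.

Section P3.
Local Open Scope ring_scope.
Lemma harm_anti (R : realType) n k : (n <= k)%N -> (k.+1%:R^-1 : R) <= n.+1%:R^-1.
Proof.
move=> nk; rewrite lef_pV2 ?posrE ?ltr0n // ler_nat; done.
Qed.
Section S.
Variable R : realType.
Local Open Scope ereal_scope.

Lemma einfs_ge (u : (\bar R)^nat) c n : (forall k, (n <= k)%N -> c <= u k) -> c <= einfs u n.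
Proof. move=> h; apply: le_ereal_inf_tmp => _ /= [k nk <-]; exact: h. Qed.

Lemma einfs_le (u : (\bar R)^nat) n : einfs u n <= u n.
Proof. by apply: ereal_inf_lbound; exists n => /=. Qed.

Lemma liminf_ge (u : (\bar R)^nat) c N : (forall k, (N <= k)%N -> c <= u k) -> c <= limn_einf u.
Proof.
move=> h; rewrite limn_einf_lim; apply: lime_ge; first exact: is_cvg_einfs.
exists N => // n /= Nn; apply: einfs_ge => k nk; apply: h; exact: leq_trans nk.
Qed.

Lemma liminf_le (u : (\bar R)^nat) c N : (forall k, (N <= k)%N -> u k <= c) -> limn_einf u <= c.
Proof.
move=> h; rewrite limn_einf_lim; apply: lime_le; first exact: is_cvg_einfs.
exists N => // n /= Nn; exact: le_trans (einfs_le u n) (h _ Nn).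
Qed.

Lemma liminf_mono (u v : (\bar R)^nat) : (forall k, u k <= v k) -> limn_einf u <= limn_einf v.
Proof.
move=> h; rewrite !limn_einf_lim; apply: lee_lim; [exact: is_cvg_einfs|exact: is_cvg_einfs|].
apply: nearW => n; apply: einfs_ge => k nk; apply: le_trans (h k).
by apply: ereal_inf_lbound; exists k.
Qed.

Lemma mu_low_sub_gen (u v : (\bar R)^nat) (c : R) :
  (forall n, u n - (c * n.+1%:R^-1)%R%:E <= v n) -> (0 <= c)%R ->
  limn_einf u <= limn_einf v.
Proof.
move=> huv c0; rewrite !limn_einf_lim.
have cw : (fun n => einfs u n + (- (c * n.+1%:R^-1))%R%:E) @ \oo --> limn (einfs u) + 0.
  apply: cvgeD; first exact: fin_num_adde_defl.
    exact: is_cvg_einfs.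
  apply: cvg_EFin; first exact: nearW.
  have -> : (0%R : R) = (- (c * 0))%R by rewrite mulr0 oppr0.
  apply: cvgN; apply: cvgMr; exact: cvg_harmonic.
rewrite -[X in X <= _]adde0 -(cvg_lim _ cw) //.
apply: lee_lim; [by apply/cvg_ex; eexists; exact: cw|exact: is_cvg_einfs|].
apply: nearW => n; apply: einfs_ge => k nk.
apply: le_trans (huv k); rewrite EFinN; apply: leeD.
  by apply: ereal_inf_lbound; exists k.
rewrite leeN2 lee_fin ler_wpM2l //; exact: harm_anti.
Qed.

Lemma mu_low_sub (A I K : set nat) (s : seq nat) : infinite_set K ->
  (forall y, I y -> y \notin s -> A y) -> mu_low R I K <= mu_low R A K.
Proof.
move=> inf hA; apply: (@mu_low_sub_gen _ _ (size s)%:R) => //.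
move=> n; rewrite -EFinB lee_fin -mulrBl ler_pM2r ?invr_gt0 ?ltr0n //.
rewrite lerBlDr -natrD ler_nat; exact: count_in_sub.
Qed.
End S.

End P3.

Section P4.
Local Open Scope ring_scope.
Lemma count_prefix (a : pred nat) x N :
  count a (Defs.prefix x N) = (\sum_(t < N) a (x t))%N.
Proof.
rewrite /Defs.prefix /mkseq -sum1_count big_map big_mkcond.
have -> : iota 0 N = index_iota 0 N by rewrite /index_iota subn0.
by rewrite big_mkord; apply: eq_bigr => t _; case: (a (x t)).
Qed.

Lemma ev_noise (R : realType) (K : set nat) x k : admissible R K x ->
  exists N0, forall n, (N0 <= n)%N ->
    (count (fun y => ~~ `[< K y >]) (Defs.prefix x n.+1) * 2 ^ k < n.+1)%N.
Proof.
move=> [_ [Kh [sK [_ [_ cv]]]]].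
have ep : (0 : R) < (2 ^ k)%:R^-1 by rewrite invr_gt0 ltr0n expn_gt0.
have [N0 _ hN] := cvgr_dist_lt _ _ cv _ ep.
exists N0 => n /hN; rewrite count_prefix sub0r normrN /noise_rate.
rewrite ger0_norm ?divr_ge0 // ltr_pdivrMr ?ltr0n // mulrC ltr_pdivlMr ?ltr0n ?expn_gt0 //.
rewrite -natrM ltr_nat => h; apply: leq_ltn_trans h.
rewrite leq_mul2r; apply/orP; right; apply: leq_sum => t _.
case: (asboolP (K (x t))) => //= nK.
by rewrite asbool_neg; case: (asboolP (Kh (x t))) => // /sK.
Qed.

End P4.

Lemma geo (o : nat -> nat) N k : (forall j, o j * 2 ^ j.+2 <= N)%N ->
  (2 ^ k.+1 * \sum_(j < k) o j + N <= 2 ^ k * N)%N.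
Proof.
move=> h; elim: k => [|k IH]; first by rewrite big_ord0 muln0 add0n expn0 mul1n.
rewrite big_ord_recr /= mulnDr.
have := h k; rewrite !expnS in IH *; move: (2 ^ k) (\sum_(j < k) o j) (o k) IH => P S ok IH hk. nia.
Qed.

Lemma geo2 (o : nat -> nat) N k : (forall j, o j * 2 ^ j.+2 <= N)%N -> (0 < N)%N ->
  (2 * \sum_(j < k) o j < N)%N.
Proof.
move=> h N0; have := @geo o N k h; rewrite expnS.
have : (0 < 2 ^ k)%N by rewrite expn_gt0.
move: (2 ^ k) (\sum_(j < k) o j) => P S; nia.
Qed.

Lemma finite_bounded (A : set nat) : finite_set A -> exists b, forall y, A y -> (y < b)%N.
Proof.
move=> /finite_fsetP [X ->]; exists (\max_(z <- X) z).+1 => y Xy.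
by rewrite ltnS; apply: (@leq_bigmax_seq _ _ xpredT id y).

Qed.

Section Gen.
Variable Lf : nat -> set nat.

Definition out j (s : seq nat) := count (fun y => ~~ `[< Lf j y >]) s.
Definition inT (s : seq nat) j := ((j <= size s) && (out j s * 2 ^ j.+2 <= size s))%N.
Definition Iset s m := [set y | forall j, inT s j -> (j <= m)%N -> Lf j y].
Definition Ok s m := infinite_set (Iset s m).
Definition mm s := (\max_(m < (size s).+1 | `[< Ok s m >]) m)%N.
Definition Gen s := [set y | Iset s (mm s) y /\ y \notin s].

Definition FS k (S : {set 'I_k}) := [set y | forall j : 'I_k, j \in S -> Lf j y].
Arguments FS {k}.

Lemma bound_uniform k : exists Bd, forall S : {set 'I_k},
  finite_set (FS S) -> forall y, FS S y -> (y < Bd)%N.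
Proof.
pose P (S : {set 'I_k}) := [set b | finite_set (FS S) -> forall y, FS S y -> (y < b)%N].
exists (\max_(S : {set 'I_k}) xget 0%N (P S)) => S fS y hy.
have : P S (xget 0%N (P S)).
  apply: xgetPex; have [b hb] := @finite_bounded _ fS; by exists b => _.
move=> /(_ fS y hy) h; apply: (leq_trans h).
exact: (@leq_bigmax _ (fun S => xget 0%N (P S)) S).
Qed.

Lemma count_not_I s i t :
  (count (predC (fun y => `[< Iset s i y >])) t <=
   \sum_(j < i.+1) count (fun y => inT s j && ~~ `[< Lf j y >]) t)%N.
Proof.
elim: t => [|y t IH]; first by rewrite big1.
rewrite /= big_split /= leq_add //.
case: (asboolP (Iset s i y)) => //= nI.
have [j hj] : exists j, ~ (inT s j -> (j <= i)%N -> Lf j y).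
  by apply: contrapT => hn; apply: nI => j; apply: contrapT => hh; apply: hn; exists j.
have h1 : inT s j by apply: contrapT => hh; apply: hj => a; exfalso; exact: hh a.
have h2 : (j <= i)%N by apply: contrapT => hh; apply: hj => _ b; exfalso; exact: hh b.
have h3 : ~ Lf j y by move=> hl; apply: hj => _ _.
rewrite (bigD1 (Ordinal (h2 : (j < i.+1)%N))) //= h1 /=.
have -> : `[< Lf j y >] = false by apply/asboolP. by [].
Qed.

Lemma ok_from_count i s Bd :
  (forall S : {set 'I_i.+1}, finite_set (FS S) -> forall y, FS S y -> (y < Bd)%N) ->
  uniq s -> (0 < size s)%N -> (2 * Bd <= size s)%N -> Ok s i.
Proof.
move=> hBd us s0 sBd fin.
pose S := [set j : 'I_i.+1 | inT s j]%SET.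
have eqI : Iset s i = FS S.
  apply/seteqP; split => y /= hy.
    by move=> j; rewrite inE => hj; apply: hy => //; rewrite -ltnS.
  move=> j hj ji; apply: (hy (Ordinal (ji : (j < i.+1)%N))); by rewrite inE.
have c1 : (count (fun y => `[< Iset s i y >]) s <= Bd)%N.
  apply: (@leq_trans (count (mem (iota 0 Bd)) s)); last first.
    by rewrite -[X in (_ <= X)%N](size_iota 0 Bd); apply: count_uniq_le.
  apply: sub_count => y /asboolP; rewrite eqI => hy.
  rewrite /= mem_iota add0n; apply: (hBd S); [by rewrite -eqI | exact: hy].
have c2 := count_not_I s i s.
pose o j := count (fun y => inT s j && ~~ `[< Lf j y >]) s.
have ho : forall j, (o j * 2 ^ j.+2 <= size s)%N.
  move=> j; rewrite /o; case hj: (inT s j) => /=.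
    by move: hj; rewrite /inT /out => /andP[].
  by rewrite count_pred0 mul0n.
have := @geo2 o (size s) i.+1 ho s0.
have := count_predC (fun y => `[< Iset s i y >]) s.
move=> hc hg; have c3 : (count (predC (fun y => `[< Iset s i y >])) s <= \sum_(j < i.+1) o j)%N := c2. set a := count (fun y => `[< Iset s i y >]) s in hc c1. set b := count (predC _) s in hc c3. set d := (\sum_(j < i.+1) o j)%N in hg c3. clear -hc c1 c3 hg sBd. clearbody a b d. move: (size s) sBd hc hg => N sBd hc hg. have h1 : (2 * (a + b) <= 2 * Bd + 2 * d)%N by rewrite mulnDr leq_add // leq_mul2l /=. rewrite hc in h1. have h2 : (2 * Bd + 2 * d < N + N)%N by rewrite -addnS; apply: leq_add. by move: (leq_ltn_trans h1 h2); rewrite mul2n -addnn ltnn.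
Qed.
End Gen.


Section P5.
Local Open Scope ring_scope.
Lemma dir1 (R : realType) (C : set (set nat)) (rho : R) (G : seq nat -> set nat) :
  (forall K x, C K -> admissible R K x ->
        generates_in_limit G K x /\ achieves_density rho G K x) ->
   (forall C' : set (set nat),
      C' `<=` C -> finite_set C' -> C' !=set0 ->
      infinite_set (\bigcap_(L in C') L) ->
      forall L, C' L -> (rho%:E <= mu_low R (\bigcap_(L'' in C') L'') L)%E).
Proof.
move=> hG C' sC' fC' _ infI L C'L.
set I := \bigcap_(L in C') L.
set x := bnth I.
have adm : forall L', C' L' -> admissible R L' x.
  move=> L' hL'; split; first exact: bnth_inj.
  exists I; split; first by move=> y Iy; exact: Iy.
  split => //; split.
    move=> y Iy; exists (cnt I y) => //; exact: bnth_cnt.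
  have -> : noise_rate R I x = fun=> 0.
    apply: funext => n; rewrite /noise_rate big1 ?mul0r //.
    move=> t _; rewrite asbool_neg asboolT //; exact: (proj1 (@bnth_spec I t infI)).
  exact: cvg_cst.
have [X eX] := (@finite_fsetP _ C').1 fC'.
have ev : \forall n \near \oo, gen_out G x n `<=` I.
  have := @filter_bigI nat (set nat) X (fun L' => [set n | gen_out G x n `<=` L']) \oo _.
  move=> /(_ _) [].
  - move=> L' L'X.
    have hL' : C' L' by rewrite eX.
    have [[N hN] _] := hG L' x (sC' _ hL') (adm _ hL').
    by exists N => // n /= Nn; apply: hN.
  - move=> N _ hN; exists N => // n Nn y Ay L' hL'.
    have : L' \in X by move: hL'; rewrite eX.
    by move=> L'X; apply: (hN n Nn L' _ y Ay).
have [_ hd] := hG L x (sC' _ C'L) (adm _ C'L).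
have [N _ hN] := ev.
apply: le_trans hd _.
apply: (@liminf_le _ _ _ N) => n Nn.
apply: (@mu_low_sub _ _ _ _ [::]).
  apply: contra_not infI => fL; apply: sub_finite_set fL => y Iy; exact: Iy.
by move=> y Ay _; apply: (hN n Nn).
Qed.

Lemma Ok_mm (Lf : nat -> set nat) s i : (i <= size s)%N -> Ok Lf s i ->
  (i <= mm Lf s)%N /\ Ok Lf s (mm Lf s).
Proof.
move=> hi ok; have hi' : (i < (size s).+1)%N by [].
split.
  by apply: (@leq_bigmax_cond _ (fun m : 'I_(size s).+1 => `[< Ok Lf s m >]) (fun m => nat_of_ord m) (Ordinal hi')); apply/asboolP.
rewrite /mm (@bigop.bigmax_eq_arg _ (Ordinal hi')); last by apply/asboolP.
by case: arg_maxnP => [|m Pm _]; [apply/asboolP|apply/asboolP].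
Qed.

Lemma dir2 (R : realType) (C : set (set nat)) (rho : R) :
  is_collection C ->
   (forall C' : set (set nat),
      C' `<=` C -> finite_set C' -> C' !=set0 ->
      infinite_set (\bigcap_(L in C') L) ->
      forall L, C' L -> (rho%:E <= mu_low R (\bigcap_(L'' in C') L'') L)%E) ->
  (exists G : seq nat -> set nat,
      set_generator G /\
      forall K x, C K -> admissible R K x ->
        generates_in_limit G K x /\ achieves_density rho G K x).
Proof.
move=> [cC infC] hC.
case/pfcard_geP: cC => [C0|/surjfunPex [Lf eC]].
  exists (fun _ => set0); split; first by move=> s y _.
  by move=> K x; rewrite C0.
exists (Gen Lf); split.
  by move=> s y ys [_ /negP].
move=> K x CK adm.
have LfC : forall j, C (Lf j) by move=> j; rewrite eC; exists j.
have [i _ Ki] : exists2 i, setT i & Lf i = K by move: CK; rewrite eC.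
subst K.
have xinj : injective x by case: adm.
have [N1 hN1] := @ev_noise R (Lf i) x i.+2 adm.
have [Bd hBd] := @bound_uniform Lf i.+1.
pose N0 := maxn N1 (maxn i (2 * Bd)).
have key : forall n, (N0 <= n)%N ->
  let s := Defs.prefix x n.+1 in
  Gen Lf s `<=` Lf i /\ (rho%:E <= mu_low R (Gen Lf s) (Lf i))%E.
  move=> n hn s.
  have ss : size s = n.+1 by rewrite size_mkseq.
  have hN : [/\ (N1 <= n)%N, (i <= n)%N & (2 * Bd <= n)%N].
    by move: hn; rewrite /N0 !geq_max => /and3P[].
  case: hN => h1 h2 h3.
  have inTi : inT Lf s i.
    rewrite /inT ss (leq_trans h2) //=; apply: ltnW; exact: hN1.
  have oki : Ok Lf s i.
    apply: (@ok_from_count Lf i s Bd hBd); first exact: mkseq_uniq.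
      by rewrite ss.
    by rewrite ss (leq_trans h3).
  have his : (i <= size s)%N by rewrite ss (leq_trans h2).
  have [imm okm] := @Ok_mm Lf s i his oki.
  split.
    by move=> y [hy _]; apply: hy.
  pose C' := Lf @` [set j | inT Lf s j /\ (j <= mm Lf s)%N].
  have eqI : \bigcap_(L in C') L = Iset Lf s (mm Lf s).
    apply/seteqP; split => y hy.
      by move=> j hj jm; apply: hy; exists j.
    by move=> L [j [hj jm] <-]; apply: hy.
  have : (rho%:E <= mu_low R (\bigcap_(L in C') L) (Lf i))%E.
    apply: hC.
    - by move=> L [j _ <-].
    - apply: finite_image; apply: (@sub_finite_set _ _ `I_(mm Lf s).+1) => // j [_ jm] /=.
      by rewrite ltnS.
    - by exists (Lf i); exists i.
    - by rewrite eqI.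
    - by exists i.
  rewrite eqI => h; apply: le_trans h _.
  apply: (@mu_low_sub _ _ _ _ s); first exact: infC.
  by move=> y hy ys.
split.
  by exists N0 => n /key [].
rewrite /achieves_density; apply: (@liminf_ge _ _ _ N0) => n /key [].
by [].
Qed.

End P5.

Local Open Scope ring_scope.

Theorem theorem6p11 (R : realType) (C : set (set nat)) (rho : R) :
  is_collection C -> 0 < rho <= 1 ->
  ((exists G : seq nat -> set nat,
      set_generator G /\
      forall K x, C K -> admissible R K x ->
        generates_in_limit G K x /\ achieves_density rho G K x)
   <->
   (forall C' : set (set nat),
      C' `<=` C -> finite_set C' -> C' !=set0 ->
      infinite_set (\bigcap_(L in C') L) ->
      forall L, C' L -> (rho%:E <= mu_low R (\bigcap_(L'' in C') L'') L)%E)).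
Proof.
move=> hC _; split.
  by move=> [G [_ hG]]; exact: (@dir1 R C rho G hG).
exact: dir2.
Qed.
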